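(* Let $L$ be a construction of an ASC-hypergraph $H$, let $Y\in L$ and put $Z=\bigcup H\setminus Y$. Then ${}_Z L$ is a construction of the ASC-hypergraph ${}_Z H$.
   Context: A hypergraph is a finite set $H$ of nonempty subsets of some finite set; its carrier is $\bigcup H$. For a family $F$ and set $Y$, $F_Y=\{X\in F\mid X\subseteq Y\}$, and ${}_Z F=\{X\cap Z\mid X\in F,\ X\cap Z\neq\emptyset\}$. A hypergraph partition of $H$ is a partition $\{H_1,\dots,H_n\}$ ($n\ge0$) of the set $H$ with $\{\bigcup H_1,\dots,\bigcup H_n\}$ a partition of $\bigcup H$; $H$ is connected if it has exactly one hypergraph partition; the finest hypergraph partition is the unique one whose blocks are connected. $H$ is atomic if $\{x\}\in H$ for all $x\in\bigcup H$; saturated if $X_1,X_2\in H$ with $X_1\cap X_2\neq\emptyset$ imply $X_1\cup X_2\in H$. An ASC-hypergraph is one that is atomic, saturated and connected. Constructions of an atomic $H$, by induction on $|\bigcup H|$: (0) $\emptyset$ is the only construction of $\emptyset$; (1) if $|\bigcup H|\ge1$, $H$ connected, $x\in\bigcup H$, $K$ a construction of $H_{\bigcup H\setminus\{x\}}$, then $K\cup\{\bigcup H\}$ is a construction of $H$; (2) if $H$ is not connected with finest hypergraph partition $\{H_1,\dots,H_n\}$, $n\ge2$, and $K_i$ is a construction of $H_i$, then $K_1\cup\dots\cup K_n$ is a construction of $H$. *)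

(* Defs.v *)
From mathcomp Require Import all_boot.
Set Implicit Arguments. Unset Strict Implicit. Unset Printing Implicit Defensive.

Section Hyper.
Variable T : finType.
Implicit Types (H F K : {set {set T}}) (Y Z : {set T}).

Definition hypergraph H : Prop := set0 \notin H.

Definition carrier H : {set T} := cover H.

Definition restr F Y : {set {set T}} := [set X in F | X \subset Y].

Definition trace Z F : {set {set T}} :=
  [set X :&: Z | X in [set X in F | X :&: Z != set0]].

Definition hpartition H (P : {set {set {set T}}}) : Prop :=
  partition P H /\
  (forall H1 H2, H1 \in P -> H2 \in P -> H1 != H2 ->
     [disjoint carrier H1 & carrier H2]).

Definition connected H : Prop :=
  exists P, hpartition H P /\ forall Q, hpartition H Q -> Q = P.

Definition finest_hpartition H (P : {set {set {set T}}}) : Prop :=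
  hpartition H P /\ forall Hi, Hi \in P -> connected Hi.

Definition atomic H : Prop := forall x, x \in carrier H -> [set x] \in H.

Definition saturated H : Prop :=
  forall X1 X2, X1 \in H -> X2 \in H -> X1 :&: X2 != set0 -> X1 :|: X2 \in H.

Definition ASC H : Prop := [/\ hypergraph H, atomic H, saturated H & connected H].

Inductive construction : {set {set T}} -> {set {set T}} -> Prop :=
| constr_empty : construction set0 set0
| constr_conn H x K :
    hypergraph H -> atomic H -> carrier H != set0 -> connected H ->
    x \in carrier H ->
    construction (restr H (carrier H :\ x)) K ->
    construction H (K :|: [set carrier H])
| constr_disc H (P : {set {set {set T}}}) (f : {set {set T}} -> {set {set T}}) :
    hypergraph H -> atomic H -> ~ connected H ->
    finest_hpartition H P -> 2 <= #|P| ->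
    (forall Hi, Hi \in P -> construction Hi (f Hi)) ->
    construction H (\bigcup_(Hi in P) f Hi).

End Hyper.

(* Main.v *)
Require Import Defs.
From mathcomp Require Import all_boot.
Set Implicit Arguments. Unset Strict Implicit. Unset Printing Implicit Defensive.

Section Helpers.
Variable T : finType.
Implicit Types (H F K L : {set {set T}}) (P Q R : {set {set {set T}}}) (X Y Z W A : {set T}).

Lemma carrierP F x : reflect (exists2 X, X \in F & x \in X) (x \in carrier F).
Proof. rewrite /carrier /cover; apply: (iffP bigcupP) => [[X] | [X]]; by exists X. Qed.

Lemma sub_carrier F X : X \in F -> X \subset carrier F.
Proof. move=> XF; apply/subsetP => x xX; apply/carrierP; by exists X. Qed.

Lemma carrierS (FA FB : {set {set T}}) : FA \subset FB -> carrier FA \subset carrier FB.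
Proof.
move=> s; apply/subsetP => x /carrierP [X XA xX]; apply/carrierP; exists X => //.
exact: (subsetP s).
Qed.

Lemma traceP Z F W :
  reflect (exists2 X, X \in F & (X :&: Z != set0) /\ W = X :&: Z) (W \in trace Z F).
Proof.
apply: (iffP imsetP) => [[X] | [X XF [nz ->]]].
  rewrite inE => /andP [XF nz] ->; by exists X.
by exists X => //; rewrite inE XF.
Qed.

Lemma trace_nz Z F : set0 \notin trace Z F.
Proof. apply/negP => /traceP [X _ [nz e]]; by rewrite -e eqxx in nz. Qed.

Lemma carrier_trace Z F : carrier (trace Z F) = carrier F :&: Z.
Proof.
apply/setP => x; rewrite inE; apply/carrierP/andP.
  move=> [W /traceP [X XF [nz ->]] /setIP [xX xZ]]; split => //.
  by apply/carrierP; exists X.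
move=> [/carrierP [X XF xX] xZ]; exists (X :&: Z); last by rewrite inE xX xZ.
apply/traceP; exists X => //; split => //.
by apply/set0Pn; exists x; rewrite inE xX xZ.
Qed.

Lemma trace_sub Z F A :
  (forall X, X \in F -> X \subset A) -> trace Z F = trace (A :&: Z) F.
Proof.
move=> hA; apply/setP => W.
have e X : X \in F -> X :&: (A :&: Z) = X :&: Z.
  by move=> XF; rewrite setIA (setIidPl (hA X XF)).
apply/traceP/traceP => [][X XF [nz ->]]; exists X => //; move: nz; rewrite (e X XF) => nz; by split.
Qed.

Lemma trace_id Z F :
  set0 \notin F -> (forall X, X \in F -> X \subset Z) -> trace Z F = F.
Proof.
move=> h0 hZ; apply/setP => W; apply/traceP/idP.
  by move=> [X XF [_ ->]]; rewrite (setIidPl (hZ X XF)).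
move=> WF; exists W => //; rewrite (setIidPl (hZ W WF)); split => //.
by apply: contraNneq h0 => eW; rewrite -eW.
Qed.

Lemma trace_set0 F : trace set0 F = set0.
Proof.
apply/setP => W; rewrite in_set0; apply/negbTE/negP => /traceP [X _ [nz _]].
by rewrite setI0 eqxx in nz.
Qed.

Lemma traceU Z (FA FB : {set {set T}}) : trace Z (FA :|: FB) = trace Z FA :|: trace Z FB.
Proof.
apply/setP => W; rewrite inE; apply/traceP/orP => [[X] | ].
  by rewrite inE => /orP [XA|XB] h; [left|right]; apply/traceP; exists X.
case => /traceP [X XA h]; exists X => //; by rewrite inE XA ?orbT.
Qed.

Lemma trace_set1 Z C : C :&: Z != set0 -> trace Z [set C] = [set C :&: Z].
Proof.
move=> nz; apply/setP => W; rewrite inE; apply/traceP/eqP => [[X] | ->].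
  by rewrite inE => /eqP -> [_ ->].
by exists C; rewrite ?inE.
Qed.

Lemma trace_mono Z (FA FB : {set {set T}}) : FA \subset FB -> trace Z FA \subset trace Z FB.
Proof.
move=> s; apply/subsetP => W /traceP [X XA h]; apply/traceP; exists X => //.
exact: (subsetP s).
Qed.

Lemma trace_atomic Z H : atomic H -> atomic (trace Z H).
Proof.
move=> aH x; rewrite carrier_trace inE => /andP [xC xZ]; apply/traceP.
exists [set x]; first exact: aH.
split; first by apply/set0Pn; exists x; rewrite !inE eqxx xZ.
by apply/esym/setIidPl; rewrite sub1set.
Qed.

Lemma trace_sat Z H : saturated H -> saturated (trace Z H).
Proof.
move=> sH W1 W2 /traceP [X1 X1H [nz1 ->]] /traceP [X2 X2H [nz2 ->]] /set0Pn [y].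
rewrite !inE => /andP [/andP [y1 yZ] /andP [y2 _]].
apply/traceP; exists (X1 :|: X2).
  by apply: sH => //; apply/set0Pn; exists y; rewrite inE y1 y2.
by rewrite setIUl; split => //; apply/set0Pn; exists y; rewrite !inE y1 yZ.
Qed.

Lemma restr_sat H A : saturated H -> saturated (restr H A).
Proof.
move=> sH W1 W2; rewrite !inE => /andP [h1 s1] /andP [h2 s2] nz.
by rewrite sH //= subUset s1 s2.
Qed.

Lemma carrier_restr H A : carrier (restr H A) \subset A.
Proof.
apply/subsetP => x /carrierP [X]; rewrite inE => /andP [_ s] xX; exact: (subsetP s).
Qed.

Lemma hpart_cover H P : hpartition H P -> cover P = H.
Proof. by move=> [/and3P [/eqP -> _ _] _]. Qed.

Lemma hpart_nz H P : hpartition H P -> set0 \notin P.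
Proof. by move=> [/and3P [_ _ ->] _]. Qed.

Lemma block_sub H P B : hpartition H P -> B \in P -> B \subset H.
Proof. move=> hP BP; rewrite -(hpart_cover hP); exact: bigcup_sup. Qed.

Lemma block_meet H P B1 B2 x : hpartition H P -> B1 \in P -> B2 \in P ->
  x \in carrier B1 -> x \in carrier B2 -> B1 = B2.
Proof.
move=> [_ hd] h1 h2 x1 x2; case: (eqVneq B1 B2) => // ne.
by have := disjointFr (hd _ _ h1 h2 ne) x1; rewrite x2.
Qed.

Lemma mk_hpart H Q : set0 \notin H -> cover Q = H -> set0 \notin Q ->
  (forall B1 B2, B1 \in Q -> B2 \in Q -> B1 != B2 -> [disjoint carrier B1 & carrier B2]) ->
  hpartition H Q.
Proof.
move=> h0 cQ nQ hd; split => //; apply/and3P; split => //; first by apply/eqP.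
apply/trivIsetP => B1 B2 h1 h2 ne; rewrite -setI_eq0; apply/eqP/setP => X.
rewrite !inE; apply/negbTE/negP => /andP [X1 X2].
have XH : X \in H by rewrite -cQ; apply/bigcupP; exists B1.
have /set0Pn [x xX] : X != set0 by apply: contraNneq h0 => <-.
have := disjointFr (hd _ _ h1 h2 ne) (subsetP (sub_carrier X1) x xX).
by rewrite (subsetP (sub_carrier X2) x xX).
Qed.

Lemma hpart1 H : set0 \notin H -> H != set0 -> hpartition H [set H].
Proof.
move=> h0 nz; apply: mk_hpart => //; first exact: cover1.
  by rewrite inE eq_sym.
by move=> B1 B2; rewrite !inE => /eqP -> /eqP ->; rewrite eqxx.
Qed.

Lemma connected_set0 : connected (set0 : {set {set T}}).
Proof.
exists set0; split.
  apply: mk_hpart; rewrite ?in_set0 //; first by rewrite /cover big_set0.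
  by move=> B1; rewrite in_set0.
move=> Q hQ; apply/setP => B; rewrite in_set0; apply/negbTE/negP => BQ.
have := block_sub hQ BQ; rewrite subset0 => /eqP eB.
by have := hpart_nz hQ; rewrite -eB BQ.
Qed.

Lemma conn_carrier H : set0 \notin H -> carrier H \in H -> connected H.
Proof.
move=> h0 CH; have nz : H != set0 by apply/set0Pn; exists (carrier H).
exists [set H]; split; first exact: hpart1.
move=> Q hQ; have cQ := hpart_cover hQ.
have : carrier H \in cover Q by rewrite cQ.
move=> /bigcupP [B BQ CB].
have eQ : Q = [set B].
  apply/setP => FB; rewrite inE; apply/idP/eqP => [FBQ | ->] //.
  have /set0Pn [X XFB] : FB != set0 by apply: contraNneq (hpart_nz hQ) => <-.
  have XH : X \in H by apply: (subsetP (block_sub hQ FBQ)).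
  have /set0Pn [x xX] : X != set0 by apply: contraNneq h0 => <-.
  apply: (block_meet hQ FBQ BQ (x := x)); first exact: (subsetP (sub_carrier XFB)).
  apply: (subsetP (sub_carrier CB)); exact: (subsetP (sub_carrier XH)).
by move: cQ; rewrite eQ cover1 => ->.
Qed.

Lemma conn_sat_carrier H : set0 \notin H -> saturated H -> connected H ->
  H != set0 -> carrier H \in H.
Proof.
move=> h0 sH cH /set0Pn [X0 X0H].
case: (@arg_maxnP _ X0 (mem H) (fun X => #|X|) X0H) => M MH maxM.
have inM X : X \in H -> X :&: M != set0 -> X \subset M.
  move=> XH nz; have UH := sH _ _ XH MH nz.
  have : M == X :|: M by rewrite eqEcard subsetUr; exact: maxM.
  by move/eqP => ->; rewrite subsetUl.
pose H1 := [set X in H | X \subset M]; pose H2 := H :\: H1.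
have M1 : M \in H1 by rewrite inE subxx andbT; exact: MH.
case: (eqVneq H2 set0) => [e | ne].
  suff -> : carrier H = M by [].
  apply/eqP; rewrite eqEsubset sub_carrier // andbT.
  apply/subsetP => x /carrierP [X XH xX].
  have : X \notin H2 by rewrite e in_set0.
  rewrite !inE XH andbT negbK => XM; exact: (subsetP XM).
exfalso; case: cH => R [hR uR].
have d12 : [disjoint carrier H1 & carrier H2].
  rewrite -setI_eq0; apply/eqP/setP => x; rewrite !inE; apply/negbTE/negP.
  move=> /andP [/carrierP [X1 X1in x1] /carrierP [X2 X2in x2]].
  move: X1in X2in; rewrite !inE => /andP [_ X1M] /andP [nX2 X2H].
  move: nX2; rewrite X2H /= => /negP; apply; apply: inM => //.
  by apply/set0Pn; exists x; rewrite inE x2 (subsetP X1M).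
have hQ : hpartition H [set H1; H2].
  apply: mk_hpart => //.
  - apply/setP => X; apply/bigcupP/idP => [[B] | XH].
      by rewrite in_set2 => /orP [/eqP -> | /eqP ->]; rewrite !inE => /andP [? ?].
    case: (boolP (X \subset M)) => XM.
      by exists H1; rewrite ?in_set2 ?eqxx // inE XH XM.
    by exists H2; rewrite ?in_set2 ?eqxx ?orbT // !inE XH XM.
  - rewrite in_set2 negb_or; apply/andP; split; apply/eqP => e.
      by rewrite -e in_set0 in M1.
    by rewrite -e eqxx in ne.
  - move=> B1 B2; rewrite !in_set2 => /orP [/eqP-> | /eqP->] /orP [/eqP-> | /eqP->];
      rewrite ?eqxx // => _; by rewrite // disjoint_sym.
have nH : H != set0 by apply/set0Pn; exists M.
have e1 := uR _ hQ; have e2 := uR _ (hpart1 h0 nH).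
have : H2 \in [set H] by rewrite e2 -e1 in_set2 eqxx orbT.
have : H1 \in [set H] by rewrite e2 -e1 in_set2 eqxx.
rewrite !inE => /eqP E1 /eqP E2.
have : M \in H2 by rewrite E2 -E1.
by rewrite inE M1.
Qed.

Lemma trace_conn Z H : set0 \notin H -> saturated H -> connected H ->
  connected (trace Z H).
Proof.
move=> h0 sH cH; case: (eqVneq (trace Z H) set0) => [-> | ne].
  exact: connected_set0.
apply: conn_carrier; first exact: trace_nz.
rewrite carrier_trace; have /set0Pn [W /traceP [X XH [nz eW]]] := ne.
have nH : H != set0 by apply/set0Pn; exists X.
have CH := conn_sat_carrier h0 sH cH nH.
apply/traceP; exists (carrier H) => //; split => //.
have /set0Pn [y] := nz; rewrite inE => /andP [yX yZ].
by apply/set0Pn; exists y; rewrite inE yZ (subsetP (sub_carrier XH)).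
Qed.

Lemma block_sat H P B : saturated H -> hpartition H P -> B \in P -> saturated B.
Proof.
move=> sH hP BP X1 X2 X1B X2B nz.
have X1H := subsetP (block_sub hP BP) _ X1B.
have X2H := subsetP (block_sub hP BP) _ X2B.
have : X1 :|: X2 \in cover P by rewrite (hpart_cover hP); exact: sH.
case/bigcupP => B' B'P UB'.
have /set0Pn [y] := nz; rewrite inE => /andP [y1 y2].
have -> : B = B'; last by [].
apply: (block_meet hP BP B'P (x := y)).
  exact: (subsetP (sub_carrier X1B)).
by apply: (subsetP (sub_carrier UB')); rewrite inE y1.
Qed.

Lemma constr_props H K : construction H K ->
  set0 \notin K /\ (forall X, X \in K -> X \subset carrier H).
Proof.
elim => {H K} [|H x K hH aH nC cH xC cK [IH1 IH2] | H P f hH aH ncH [hP cP] le2 cf IH].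
- by split; [rewrite in_set0 | move=> X; rewrite in_set0].
- split; first by rewrite in_setU in_set1 negb_or IH1 /= eq_sym.
  move=> X; rewrite in_setU in_set1 => /orP [XK | /eqP -> //].
  apply: subset_trans (IH2 X XK) _; apply: carrierS; apply/subsetP => Y.
  by rewrite inE => /andP [].
- split.
    apply/negP => /bigcupP [B BP]; have [h1 _] := IH B BP; by rewrite (negbTE h1).
  move=> X /bigcupP [B BP XB]; have [_ h2] := IH B BP.
  apply: subset_trans (h2 X XB) _; exact: carrierS (block_sub hP BP).
Qed.

Lemma build H Q (g : {set {set T}} -> {set {set T}}) :
  set0 \notin H -> atomic H -> hpartition H Q -> (forall B, B \in Q -> connected B) ->
  (forall B, B \in Q -> construction B (g B)) ->
  construction H (\bigcup_(B in Q) g B).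
Proof.
move=> h0 aH hQ cB gB; have cQ := hpart_cover hQ.
case: (ltnP 1 #|Q|) => [lt | le].
  apply: (constr_disc h0 aH _ (conj hQ cB) lt gB).
  move=> [R [hR uR]].
  have nH : H != set0.
    have /set0Pn [B BQ] : Q != set0 by rewrite -card_gt0; apply: ltnW.
    have /set0Pn [X XB] : B != set0 by apply: contraNneq (hpart_nz hQ) => <-.
    apply/set0Pn; exists X; exact: (subsetP (block_sub hQ BQ)).
  have := uR _ (hpart1 h0 nH); rewrite -(uR _ hQ) => e.
  by move: lt; rewrite -e cards1.
move: le; rewrite leq_eqVlt ltnS leqn0 => /orP [/cards1P [B eQ] | /eqP /cards0_eq eQ].
  move: cQ; rewrite eQ cover1 big_set1 => <-; apply: gB; by rewrite eQ inE.
move: cQ; rewrite eQ big_set0 /cover big_set0 => <-; exact: constr_empty.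
Qed.

Lemma main H L : construction H L -> saturated H ->
  forall Y, Y \in L -> construction (trace (carrier H :\: Y) H) (trace (carrier H :\: Y) L).
Proof.
elim => {H L} [|H x K hH aH nC cH xC cK IH | H P f hH aH ncH fP le2 cf IH] sH Y.
- by rewrite in_set0.
- rewrite in_setU in_set1 => /orP [YK | /eqP ->]; last first.
    by rewrite setDv !trace_set0; exact: constr_empty.
  set C := carrier H; set H' := restr H (C :\ x).
  have [nK sK] := constr_props cK.
  have YC' : Y \subset carrier H' := sK Y YK.
  have C'x : carrier H' \subset C :\ x := carrier_restr _ _.
  have C'C : carrier H' \subset C := subset_trans C'x (subD1set _ _).
  have xZ : x \in C :\: Y.
    rewrite inE xC andbT; apply/negP => xY.
    by have := subsetP C'x x (subsetP YC' x xY); rewrite !inE eqxx.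
  have nH : H != set0.
    by apply: contraNneq nC => eH; rewrite /C eH /carrier /cover big_set0.
  have CH : C \in H := conn_sat_carrier hH sH cH nH.
  set Z := C :\: Y.
  have CZ : C :&: Z = Z by apply/setIidPr; apply: subsetDl.
  have cT : carrier (trace Z H) = Z by rewrite carrier_trace CZ.
  have eZ' : carrier H' :\: Y = carrier H' :&: Z by rewrite setIDA (setIidPl C'C).
  have IH' := IH (@restr_sat H (C :\ x) sH) Y YK; rewrite eZ' in IH'.
  have nZ : C :&: Z != set0 by rewrite CZ; apply/set0Pn; exists x.
  have eL : trace Z (K :|: [set C]) =
            trace (carrier H' :&: Z) K :|: [set carrier (trace Z H)].
    by rewrite traceU (trace_set1 nZ) CZ cT -(trace_sub Z sK).
  rewrite eL; apply: (constr_conn (x := x)).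
  + exact: trace_nz.
  + exact: trace_atomic.
  + by rewrite cT; apply/set0Pn; exists x.
  + exact: trace_conn.
  + by rewrite cT.
  suff -> : restr (trace Z H) (carrier (trace Z H) :\ x) = trace (carrier H' :&: Z) H'
    by [].
  rewrite cT; apply/setP => W; rewrite inE; apply/andP/traceP.
    move=> [/traceP [X XH [nz ->]] sub].
    have xX : x \notin X.
      apply/negP => xX; have := subsetP sub x; rewrite !inE eqxx /=.
      by rewrite xX; move: xZ; rewrite inE => -> /(_ isT).
    have XH' : X \in H'.
      rewrite inE XH /=; apply/subsetP => y yX; rewrite !inE.
      rewrite (subsetP (sub_carrier XH) y yX) andbT.
      by apply: contraNneq xX => <-.
    have e : X :&: (carrier H' :&: Z) = X :&: Z.
      by rewrite setIA (setIidPl (sub_carrier XH')).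
    by exists X => //; rewrite e.
  move=> [X XH' [nz ->]].
  have XH : X \in H by move: XH'; rewrite inE => /andP [].
  have e : X :&: (carrier H' :&: Z) = X :&: Z.
    by rewrite setIA (setIidPl (sub_carrier XH')).
  rewrite e; split; first by apply/traceP; exists X => //; rewrite -e.
  apply/subsetP => y; rewrite !inE => /andP [yX ->]; rewrite andbT.
  move: XH'; rewrite inE => /andP [_ /subsetP /(_ y yX)].
  by rewrite !inE => /andP [].
- move=> /bigcupP [B0 B0P YB0].
  have [hP cP] := fP.
  set Z := carrier H :\: Y.
  have [nf0 sf0] := constr_props (cf B0 B0P).
  have key B : B \in P -> construction (trace Z B) (trace Z (f B)).
    move=> BP; have [nf sf] := constr_props (cf B BP).
    have BH := block_sub hP BP.
    have CB : carrier B \subset carrier H := carrierS BH.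
    case: (eqVneq B B0) => [eB | ne].
      rewrite eB in BP CB sf *.
      have e : carrier B0 :&: Z = carrier B0 :\: Y by rewrite setIDA (setIidPl CB).
      rewrite (trace_sub Z (fun X => @sub_carrier B0 X)) (trace_sub Z sf) e.
      exact: IH B0 B0P (block_sat sH hP B0P) Y YB0.
    have CBZ : carrier B \subset Z.
      apply/subsetP => y yB; rewrite inE (subsetP CB y yB) andbT.
      apply/negP => yY.
      have := block_meet hP BP B0P yB (subsetP (sf0 Y YB0) y yY).
      by move=> e; rewrite e eqxx in ne.
    have h0B : set0 \notin B by apply/negP => /(subsetP BH); apply/negP.
    rewrite !trace_id //.
    - exact: cf.
    - by move=> X XB; apply: subset_trans (sf X XB) CBZ.
    - by move=> X XB; apply: subset_trans (sub_carrier XB) CBZ.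
  pose Q := [set trace Z B | B in P] :\ set0.
  pose pk B'' := odflt set0 [pick B in P | trace Z B == B''].
  pose g B'' := trace Z (f (pk B'')).
  have pkP B'' : B'' \in Q -> pk B'' \in P /\ trace Z (pk B'') = B''.
    rewrite !inE => /andP [nz /imsetP [B BP ->]]; rewrite /pk.
    case: pickP => [B1 /andP [B1P /eqP e] | /(_ B)] //.
    by rewrite BP eqxx.
  have inj B1 B2 : B1 \in P -> B2 \in P -> trace Z B1 = trace Z B2 ->
      trace Z B1 != set0 -> B1 = B2.
    move=> h1 h2 e /set0Pn [W WT]; move: (WT); rewrite e.
    case/traceP => X2 X2B [nz2 eW2]; case/traceP: WT => X1 X1B [nz1 eW1].
    have /set0Pn [y] := nz1; rewrite inE => /andP [y1 yZ].
    apply: (block_meet hP h1 h2 (x := y)); first exact: (subsetP (sub_carrier X1B)).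
    apply: (subsetP (sub_carrier X2B)).
    have : y \in W by rewrite eW1 inE y1 yZ.
    by rewrite eW2 inE => /andP [].
  have h0B B : B \in P -> set0 \notin B.
    by move=> BP; apply/negP => /(subsetP (block_sub hP BP)); apply/negP.
  have -> : trace Z (\bigcup_(B in P) f B) = \bigcup_(B in Q) g B.
    apply/setP => W; apply/traceP/bigcupP.
      move=> [X /bigcupP [B BP XB] [nz eW]].
      have [_ sf] := constr_props (cf B BP).
      have nzB : trace Z B != set0.
        have /set0Pn [y] := nz; rewrite inE => /andP [yX yZ].
        have /carrierP [X0 X0B yX0] := subsetP (sf X XB) y yX.
        apply/set0Pn; exists (X0 :&: Z); apply/traceP; exists X0 => //; split => //.
        by apply/set0Pn; exists y; rewrite inE yX0 yZ.
      have BQ : trace Z B \in Q by rewrite !inE nzB; apply/imsetP; exists B.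
      exists (trace Z B) => //.
      have [p e] := pkP _ BQ.
      have eB := inj _ _ p BP e ltac:(by rewrite e).
      by rewrite /g eB; apply/traceP; exists X.
    move=> [B'' B''Q WB'']; have [p e] := pkP _ B''Q.
    case/traceP: WB'' => X XfB h; exists X => //; apply/bigcupP; by exists (pk B'').
  apply: build.
  + exact: trace_nz.
  + exact: trace_atomic.
  + apply: mk_hpart.
    * exact: trace_nz.
    * apply/setP => W; apply/bigcupP/traceP.
        move=> [B'' B''Q WB'']; have [p e] := pkP _ B''Q.
        rewrite -e in WB''; case/traceP: WB'' => X XB h; exists X => //.
        exact: (subsetP (block_sub hP p)).
      move=> [X XH h].
      have : X \in cover P by rewrite (hpart_cover hP).
      case/bigcupP => B BP XB.
      have WT : W \in trace Z B by apply/traceP; exists X.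
      exists (trace Z B) => //; rewrite !inE; apply/andP; split.
        by apply/set0Pn; exists W.
      by apply/imsetP; exists B.
    * by rewrite !inE eqxx.
    * move=> B1 B2 h1 h2 ne.
      have [p1 e1] := pkP _ h1; have [p2 e2] := pkP _ h2.
      have ne' : pk B1 != pk B2.
        by apply: contraNneq ne => e; rewrite -e1 -e2 e.
      rewrite -e1 -e2 !carrier_trace -setI_eq0; apply/eqP/setP => y.
      rewrite !inE; apply/negbTE/negP => /andP [/andP [y1 _] /andP [y2 _]].
      by have := block_meet hP p1 p2 y1 y2; apply/eqP.
  + move=> B'' B''Q; have [p e] := pkP _ B''Q; rewrite -e.
    apply: trace_conn; [exact: h0B | exact: (block_sat sH hP p) | exact: cP].
  + move=> B'' B''Q; have [p e] := pkP _ B''Q; rewrite /g -{1}e; exact: key.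
Qed.

End Helpers.

Theorem proposition7p4 (T : finType) (H L : {set {set T}}) (Y : {set T}) :
  ASC H -> construction H L -> Y \in L ->
  ASC (trace (carrier H :\: Y) H) /\
  construction (trace (carrier H :\: Y) H) (trace (carrier H :\: Y) L).
Proof.
move=> [hH aH sH cH] cL YL; split; last exact: main.
split; [exact: trace_nz | exact: trace_atomic | exact: trace_sat | exact: trace_conn].
Qed.
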